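(* (a) For every odd integer $n\ge 3$, the cycle $C_n$ is $\mathbb{Z}_n$-distance antimagic. (b) Let $k\ge 2$ and let $n_1,\ldots,n_k\ge 3$ be odd integers each of which divides $k-1$. Then $C_{n_1}\Box\cdots\Box C_{n_k}$ is $\mathbb{Z}_{n_1}\times\cdots\times\mathbb{Z}_{n_k}$-distance antimagic. In particular, for every odd prime $p$ and integer $d\ge 1$, the Cartesian product of $pd+1$ copies of $C_p$ is $\mathbb{Z}_p^{pd+1}$-distance antimagic.
   Context: $C_n$ is the cycle of length $n$; $\mathbb{Z}_m$ is the cyclic group of integers modulo $m$. The Cartesian product $G_1\Box\cdots\Box G_k$ has vertex set $V(G_1)\times\cdots\times V(G_k)$, with two tuples adjacent iff they differ in exactly one coordinate $i$ and are adjacent there in $G_i$. For a graph $G$ with $n$ vertices and an Abelian group $A$ of order $n$ (written additively), and a bijection $f:V(G)\to A$, the weight of $x$ is $w_f(x)=\sum_{y\in N(x)} f(y)$ computed in $A$ ($N(x)$ the open neighbourhood). $f$ is an $A$-distance antimagic labelling if all weights are pairwise distinct; $G$ is $A$-distance antimagic if it admits such a labelling. *)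

(* Defs.v *)
From HB Require Import structures.
From mathcomp Require Import all_boot all_order all_algebra.
Set Implicit Arguments. Unset Strict Implicit. Unset Printing Implicit Defensive.
Import GRing.Theory.
Local Open Scope ring_scope.

(** Graphs are symmetric irreflexive relations on a finite vertex type. *)

(** The cycle C_n, on vertex set Z_n = {0,...,n-1}: x ~ y iff y = x +- 1
    (mod n).  Only used for n >= 3. *)
Definition cycle_rel (n : nat) : rel 'Z_n :=
  fun x y => (y == x + 1) || (x == y + 1).
Arguments cycle_rel n : clear implicits.

Definition box_rel (I : finType) (T_ : I -> finType) (e : forall i, rel (T_ i))
  : rel {dffun forall i, T_ i} :=
  fun x y => [exists i, e i (x i) (y i) &&
                        [forall j, (j != i) ==> (x j == y j)]].

Definition weight (V : finType) (e : rel V) (A : zmodType) (f : V -> A) (x : V) : A :=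
  \sum_(y | e x y) f y.

Definition dist_antimagic_labelling (V : finType) (e : rel V) (A : zmodType)
  (f : V -> A) : Prop :=
  bijective f /\ injective (weight e f).

Definition dist_antimagic (V : finType) (e : rel V) (A : zmodType) : Prop :=
  exists f : V -> A, dist_antimagic_labelling e f.

Definition prodZ (k : nat) (ns : 'I_k -> nat) := {dffun forall i : 'I_k, 'Z_(ns i)}.

HB.instance Definition _ k ns := Finite.on (@prodZ k ns).

Section ProdZ.
Variables (k : nat) (ns : 'I_k -> nat).
Definition prodZ_zero : prodZ ns := [ffun i => 0].
Definition prodZ_add (x y : prodZ ns) : prodZ ns := [ffun i => x i + y i].
Definition prodZ_opp (x : prodZ ns) : prodZ ns := [ffun i => - x i].
Lemma prodZ_addA : associative prodZ_add.
Proof. by move=> x y z; apply/ffunP=> i; rewrite !ffunE addrA. Qed.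
Lemma prodZ_addC : commutative prodZ_add.
Proof. by move=> x y; apply/ffunP=> i; rewrite !ffunE addrC. Qed.
Lemma prodZ_add0 : left_id prodZ_zero prodZ_add.
Proof. by move=> x; apply/ffunP=> i; rewrite !ffunE add0r. Qed.
Lemma prodZ_addN : left_inverse prodZ_zero prodZ_opp prodZ_add.
Proof. by move=> x; apply/ffunP=> i; rewrite !ffunE addNr. Qed.
End ProdZ.

HB.instance Definition _ k ns :=
  GRing.isZmodule.Build (@prodZ k ns) (@prodZ_addA k ns) (@prodZ_addC k ns)
    (@prodZ_add0 k ns) (@prodZ_addN k ns).

(* Main.v *)
Require Import Defs.
From HB Require Import structures.
From mathcomp Require Import all_boot all_order all_algebra.
Set Implicit Arguments. Unset Strict Implicit.
Section H.
Import GRing.Theory.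
Local Open Scope ring_scope.

Lemma mulrn_inj (n m : nat) (x y : 'Z_n) : (1 < n)%N -> coprime n m ->
  x *+ m = y *+ m -> x = y.
Proof.
move=> n1 cm.
have u : (m%:R : 'Z_n) \is a GRing.unit by rewrite unitZpE.
rewrite -(mulr_natr x) -(mulr_natr y).
exact: (mulIr u).
Qed.
End H.
Section H.
Import GRing.Theory.
Local Open Scope ring_scope.

Lemma two_neq0 (n : nat) : odd n -> (1 < n)%N -> (2%:R : 'Z_n) != 0.
Proof.
move=> on n1; apply/negP => /eqP h.
have : (2%:R : 'Z_n) \is a GRing.unit by rewrite unitZpE // coprimen2 on.
by rewrite h unitr0.
Qed.

End H.
Section H2.
Import GRing.Theory.
Local Open Scope ring_scope.
Lemma cw (n : nat) (x : 'Z_n) : odd n -> (1 < n)%N ->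
  weight (cycle_rel n) id x = x *+ 2.
Proof.
move=> on n1; rewrite /weight.
rewrite (eq_bigl (pred2 (x + 1) (x - 1))); last first.
  move=> y; rewrite /cycle_rel /=; congr (_ || _).
  by apply/eqP/eqP => ->; rewrite ?addrK ?subrK.
have ne : (x - 1 == x + 1) = false.
  apply/negbTE; rewrite -subr_eq0 opprD addrACA subrr add0r -opprD oppr_eq0.
  by have := two_neq0 on n1; rewrite mulr2n.
rewrite (bigD1 (x + 1)) /= ?eqxx // (bigD1 (x - 1)) /= ?eqxx ?ne ?orbT //.
rewrite big1 ?addr0; last first.
  move=> y /andP[/andP[/orP[] /eqP -> ] ]; rewrite ?eqxx //.
by rewrite addrACA subrr addr0 mulr2n.
Qed.
End H2.
Section B.
Import GRing.Theory.
Local Open Scope ring_scope.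
Variables (k : nat) (ns : 'I_k -> nat).
Hypothesis ns1 : forall i, (2 < ns i)%N.
Hypothesis nsodd : forall i, odd (ns i).

Definition nb (x : prodZ ns) (u : 'I_k * bool) : prodZ ns :=
  finfun (fun j => if j == u.1 then (if u.2 then x j + 1 else x j - 1) else x j).

Lemma sum_coord (I : finType) (P : pred I) (F : I -> prodZ ns) j :
  (\sum_(i | P i) F i) j = \sum_(i | P i) F i j.
Proof.
apply: (big_morph (fun g : prodZ ns => g j)).
  by move=> a b; rewrite /GRing.add /= ffunE.
by rewrite /GRing.zero /= ffunE.
Qed.
Lemma one_neq0 j : (1 : 'Z_(ns j)) != 0.
Proof. exact: oner_neq0. Qed.

Lemma two_neq0' j : (1 + 1 : 'Z_(ns j)) != 0.
Proof.
apply/negP => /eqP h.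
have : (2%:R : 'Z_(ns j)) \is a GRing.unit.
  by rewrite unitZpE ?coprimen2 ?nsodd // ltnW.
by rewrite -[2%:R]/(1 + 1) h unitr0.
Qed.

Lemma nb_inj x : injective (nb x).
Proof.
move=> [i b] [i' b']; move/ffunP => h.
have := h i; clear h; rewrite !ffunE eqxx /=.
case: eqP => [<-|ne].
  case: b; case: b' => //=.
  - move/addrI/eqP; rewrite -subr_eq0 opprK (negbTE (two_neq0' i)) //.
  - move/addrI/eqP; rewrite eq_sym -subr_eq0 opprK (negbTE (two_neq0' i)) //.
case: b; rewrite -{2}[x i]addr0 => /addrI /eqP;
  rewrite ?oppr_eq0 (negbTE (one_neq0 i)) //.
Qed.
Lemma nbP (x y : prodZ ns) :
  box_rel (fun i => cycle_rel (ns i)) x y = (y \in [set nb x u | u : 'I_k * bool]).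
Proof.
apply/existsP/imsetP.
  move=> [i /andP[c /forallP fa]].
  move: c; rewrite /cycle_rel => /orP[] /eqP e.
    exists (i, true) => //; apply/ffunP => j; rewrite ffunE /=.
    case: eqP => [->//|/eqP ne]; by have := fa j; rewrite ne => /eqP.
  exists (i, false) => //; apply/ffunP => j; rewrite ffunE /=.
  case: eqP => [->|/eqP ne]; last by have := fa j; rewrite ne => /eqP.
  by rewrite e addrK.
move=> [[i b] _ ->]; exists i; apply/andP; split.
  rewrite /cycle_rel ffunE eqxx; case: b => /=; first by rewrite eqxx.
  by rewrite subrK eqxx orbT.
apply/forallP => j; apply/implyP => ne; by rewrite ffunE (negbTE ne).
Qed.

Lemma box_weight (x : prodZ ns) j :
  weight (box_rel (fun i => cycle_rel (ns i))) (fun v => v : prodZ ns) x j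
    = x j *+ 2 *+ k.
Proof.
rewrite /weight (eq_bigl _ _ (nbP x)) big_imset /=; last by move=> u v _ _; apply: nb_inj.
rewrite sum_coord (eq_bigl xpredT) // -(pair_bigA _ (fun i b => nb x (i, b) j)) /=.
rewrite (eq_bigr (fun _ => x j *+ 2)).
  by rewrite sumr_const card_ord.
move=> i _; rewrite big_bool /= !ffunE.
case: eqP => _; last by rewrite mulr2n.
by rewrite addrACA subrr addr0 mulr2n.
Qed.
End B.

Section Main.
Import GRing.Theory.
Local Open Scope ring_scope.
Lemma coprime_k (n k : nat) : odd n -> (n %| k.-1)%N -> (0 < k)%N -> coprime n (2 * k).
Proof.
move=> on /dvdnP[q e] k0; rewrite coprimeMr coprimen2 on /=.
rewrite -coprime_modr -(prednK k0) e -addn1 modnMDl coprime_modr coprimen1 //.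
Qed.

Lemma partB (k : nat) (ns : 'I_k -> nat) : (2 <= k)%N ->
     (forall i, [&& odd (ns i), (3 <= ns i)%N & (ns i %| k.-1)%N]) ->
     dist_antimagic (box_rel (fun i => cycle_rel (ns i))) (prodZ ns).
Proof.
move=> hk H.
have ns1 : forall i, (2 < ns i)%N by move=> i; case/and3P: (H i).
have nsodd : forall i, odd (ns i) by move=> i; case/and3P: (H i).
exists (fun v => v : prodZ ns); split; first by exists (fun v => v).
move=> x y e; apply/ffunP => j.
have e2 := congr1 (fun g : prodZ ns => g j) e.
rewrite /= !(box_weight ns1 nsodd) -!mulrnA in e2.
case/and3P: (H j) => o n3 d.
apply: (mulrn_inj (ltnW n3) _ e2).
by apply: coprime_k => //; exact: ltnW.
Qed.

Lemma partA (n : nat) : odd n -> (3 <= n)%N -> dist_antimagic (cycle_rel n) 'Z_(n).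
Proof.
move=> on n3; exists (fun v => v); split; first by exists (fun v => v).
move=> x y e; rewrite !cw ?(ltnW n3) // in e.
by apply: (mulrn_inj (ltnW n3) _ e); rewrite coprimen2.
Qed.
End Main.

Theorem mainTheorem9 :
  (* (a) *)
  (forall n : nat, odd n -> (3 <= n)%N ->
     dist_antimagic (cycle_rel n) 'Z_(n)) /\
  (* (b) *)
  (forall (k : nat) (ns : 'I_k -> nat), (2 <= k)%N ->
     (forall i, [&& odd (ns i), (3 <= ns i)%N & (ns i %| k.-1)%N]) ->
     dist_antimagic (box_rel (fun i => cycle_rel (ns i))) (prodZ ns)) /\
  (* in particular *)
  (forall p d : nat, prime p -> odd p -> (1 <= d)%N ->
     dist_antimagic (box_rel (fun i : 'I_(p * d).+1 => cycle_rel p))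
                    (prodZ (fun _ : 'I_(p * d).+1 => p))).
Proof.
split; first exact: partA.
split; first exact: partB.
move=> p d pp op d1.
have p3 : (3 <= p)%N.
  have p2 := prime_gt1 pp; case: p p2 op {pp} => [|[|[|]]] //.
apply: (@partB _ (fun _ : 'I_(p * d).+1 => p)).
  by rewrite ltnS muln_gt0 (ltnW (ltnW p3)).
by move=> _; rewrite op p3 /= dvdn_mulr.
Qed.
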